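(* Let $H$ be a cocommutative Hopf algebra over $\mathbb{C}$. The finite-dimensional completely reducible $H$-modules $V$ which admit both a symmetric and a skew-symmetric non-degenerate $H$-invariant bilinear form are exactly the $H$-modules of the form $V\cong W\oplus W^*$ for finite-dimensional $H$-modules $W$.
   Context: A bilinear form $\langle\cdot,\cdot\rangle$ on an $H$-module $V$ is $H$-invariant if $\langle h\cdot v,w\rangle=\langle v,S(h)\cdot w\rangle$ for all $h\in H$, $v,w\in V$, where $S$ is the antipode. $W^*$ is the contragredient module, $(h\cdot f)(w)=f(S(h)\cdot w)$. *)

(* Defs.v *)
From HB Require Import structures.
From mathcomp Require Import all_boot all_order all_algebra.
From mathcomp Require Import complex.
From mathcomp Require Import Rstruct.
From Stdlib Require Import Rdefinitions.

Set Implicit Arguments.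
Unset Strict Implicit.
Unset Printing Implicit Defensive.

Import Order.TTheory GRing.Theory Num.Theory.
Local Open Scope ring_scope.

Definition CC : fieldType := (Rdefinitions.R)[i].

(* Tensors over CC.  An element of H (x) H (resp. H (x) H (x) H) is        *)
(* represented by a finite list of pairs (resp. triples) standing for the  *)
(* sum of the corresponding pure tensors.  Two representatives denote the  *)
(* same tensor iff they agree under all products of linear functionals     *)
(* (the canonical map H(x)H -> (H* (x) H* )* is injective over a field).    *)

Definition lfunctional (H : lmodType CC) (f : H -> CC) : Prop :=
  forall (a : CC) (u v : H), f (a *: u + v) = a * f u + f v.

Definition teq2 (H : lmodType CC) (s t : seq (H * H)) : Prop :=
  forall f g : H -> CC, lfunctional f -> lfunctional g ->
    \sum_(p <- s) f p.1 * g p.2 = \sum_(p <- t) f p.1 * g p.2.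

Definition teq3 (H : lmodType CC) (s t : seq (H * H * H)) : Prop :=
  forall f g k : H -> CC, lfunctional f -> lfunctional g -> lfunctional k ->
    \sum_(p <- s) f p.1.1 * g p.1.2 * k p.2 =
    \sum_(p <- t) f p.1.1 * g p.1.2 * k p.2.

Record is_hopf (H : algType CC) (D : H -> seq (H * H)) (eps : H -> CC)
    (S : H -> H) : Prop := IsHopf {
  hopf_D_linear : forall (a : CC) (x y : H),
    teq2 (D (a *: x + y)) ([seq (a *: p.1, p.2) | p <- D x] ++ D y);
  hopf_D_mul : forall x y : H,
    teq2 (D (x * y)) [seq (p.1 * q.1, p.2 * q.2) | p <- D x, q <- D y];
  hopf_D_one : teq2 (D 1) [:: (1, 1)];
  hopf_coassoc : forall x : H,
    teq3 [seq (p.1, q.1, q.2) | p <- D x, q <- D p.2]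
         [seq (q.1, q.2, p.2) | p <- D x, q <- D p.1];
  hopf_eps_linear : forall (a : CC) (x y : H),
    eps (a *: x + y) = a * eps x + eps y;
  hopf_eps_mul : forall x y : H, eps (x * y) = eps x * eps y;
  hopf_eps_one : eps 1 = 1;
  hopf_counit_l : forall x : H, \sum_(p <- D x) eps p.1 *: p.2 = x;
  hopf_counit_r : forall x : H, \sum_(p <- D x) eps p.2 *: p.1 = x;
  hopf_S_linear : forall (a : CC) (x y : H), S (a *: x + y) = a *: S x + S y;
  hopf_antipode_l : forall x : H, \sum_(p <- D x) S p.1 * p.2 = eps x *: 1;
  hopf_antipode_r : forall x : H, \sum_(p <- D x) p.1 * S p.2 = eps x *: 1
}.

Definition cocommutative (H : algType CC) (D : H -> seq (H * H)) : Prop :=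
  forall x : H, teq2 (D x) [seq (p.2, p.1) | p <- D x].

Definition is_hmodule (H : algType CC) (V : vectType CC) (act : H -> 'End(V))
  : Prop :=
  [/\ forall (a : CC) (x y : H), act (a *: x + y) = a *: act x + act y,
      forall x y : H, act (x * y) = (act x \o act y)%VF
    & act 1 = \1%VF].

Definition hstable (H : algType CC) (V : vectType CC) (act : H -> 'End(V))
  (U : {vspace V}) : Prop := forall h : H, (act h @: U <= U)%VS.

Definition completely_reducible (H : algType CC) (V : vectType CC)
  (act : H -> 'End(V)) : Prop :=
  forall U : {vspace V}, hstable act U ->
    exists U' : {vspace V},
      [/\ hstable act U', (U + U')%VS = fullv & (U :&: U')%VS = 0%VS].

Definition bilinear_form (V : vectType CC) (b : V -> V -> CC) : Prop :=
  (forall (a : CC) (u v w : V), b (a *: u + v) w = a * b u w + b v w) /\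
  (forall (a : CC) (u v w : V), b w (a *: u + v) = a * b w u + b w v).

Definition nondegenerate_form (V : vectType CC) (b : V -> V -> CC) : Prop :=
  (forall v : V, (forall w, b v w = 0) -> v = 0) /\
  (forall w : V, (forall v, b v w = 0) -> w = 0).

Definition sym_bilin_form (V : vectType CC) (b : V -> V -> CC) : Prop :=
  forall v w : V, b v w = b w v.

Definition skew_bilin_form (V : vectType CC) (b : V -> V -> CC) : Prop :=
  forall v w : V, b v w = - b w v.

Definition hinvariant (H : algType CC) (S : H -> H) (V : vectType CC)
  (act : H -> 'End(V)) (b : V -> V -> CC) : Prop :=
  forall (h : H) (v w : V), b (act h v) w = b v (act (S h) w).

Definition dual_space (W : vectType CC) : vectType CC := 'Hom(W, CC^o).

Definition dual_act (H : algType CC) (S : H -> H) (W : vectType CC)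
  (act : H -> 'End(W)) (h : H) : 'End(dual_space W) :=
  linfun (fun f : 'Hom(W, CC^o) => (f \o act (S h))%VF).

Definition sum_act (H : algType CC) (V W : vectType CC)
  (actV : H -> 'End(V)) (actW : H -> 'End(W)) (h : H) : 'End((V * W)%type) :=
  linfun (fun p : V * W => (actV h p.1, actW h p.2)).

Definition hmod_iso (H : algType CC) (V V' : vectType CC)
  (act : H -> 'End(V)) (act' : H -> 'End(V')) : Prop :=
  exists phi : 'Hom(V, V'),
    bijective phi /\ forall h : H, (phi \o act h = act' h \o phi)%VF.

(* Main.v *)
Require Import Defs.
From HB Require Import structures.
From mathcomp Require Import all_boot all_order all_algebra.
From mathcomp Require Import complex Rstruct ring.
Set Implicit Arguments.
Unset Strict Implicit.
Unset Printing Implicit Defensive.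
Import Order.TTheory GRing.Theory Num.Theory.
Local Open Scope ring_scope.

Section LinHelpers.
Variables (U X : lmodType CC) (f : U -> X).
Hypothesis fL : forall (a : CC) u v, f (a *: u + v) = a *: f u + f v.

Lemma lf0 : f 0 = 0.
Proof.
have := fL 1 0 0; rewrite !scale1r addr0 => h.
by apply: (addrI (f 0)); rewrite addr0 -h.
Qed.
Lemma lfD u v : f (u + v) = f u + f v.
Proof. by rewrite -[u in LHS]scale1r fL scale1r. Qed.
Lemma lfZ a u : f (a *: u) = a *: f u.
Proof. by rewrite -[_ *: u]addr0 fL lf0 addr0. Qed.
Lemma lfN u : f (- u) = - f u.
Proof. by rewrite -scaleN1r lfZ scaleN1r. Qed.
Lemma lfB u v : f (u - v) = f u - f v.
Proof. by rewrite lfD lfN. Qed.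
Lemma lf_sum I (r : seq I) (P : pred I) (F : I -> U) :
  f (\sum_(i <- r | P i) F i) = \sum_(i <- r | P i) f (F i).
Proof. exact: (big_morph f lfD lf0). Qed.
End LinHelpers.

Section TeqM.
Variables (H : lmodType CC).

Definition islin (U : lmodType CC) (g : H -> U) :=
  forall (a : CC) x y, g (a *: x + y) = a *: g x + g y.

Lemma coord_lfun (U : vectType CC) (g : H -> U) n (e : n.-tuple U) i :
  islin g -> lfunctional (fun x => coord e i (g x)).
Proof. by move=> gL a x y /=; rewrite gL linearP. Qed.

Lemma expand_vec (U : vectType CC) (u : U) :
  u = \sum_(i < \dim (fullv : {vspace U}))
        coord (vbasis fullv) i u *: (vbasis fullv)`_i.
Proof. exact: coord_vbasis (memvf u). Qed.

Lemma teq2_M (U1 U2 : vectType CC) (X : lmodType CC) (s t : seq (H * H))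
  (al : H -> U1) (be : H -> U2) (M : U1 -> U2 -> X) :
  teq2 s t -> islin al -> islin be ->
  (forall w, forall (a : CC) u v, M (a *: u + v) w = a *: M u w + M v w) ->
  (forall w, forall (a : CC) u v, M w (a *: u + v) = a *: M w u + M w v) ->
  \sum_(p <- s) M (al p.1) (be p.2) = \sum_(p <- t) M (al p.1) (be p.2).
Proof.
move=> st alL beL M1 M2.
pose e1 := vbasis (fullv : {vspace U1}); pose e2 := vbasis (fullv : {vspace U2}).
have E : forall a b, M (al a) (be b) =
   \sum_(i < \dim (fullv : {vspace U1})) \sum_(j < \dim (fullv : {vspace U2}))
     (coord e1 i (al a) * coord e2 j (be b)) *: M e1`_i e2`_j.
  move=> a b; rewrite {1}(expand_vec (al a)) {1}(expand_vec (be b)).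
  rewrite (lf_sum (M1 _)); apply: eq_bigr => i _.
  rewrite (lfZ (M1 _)) (lf_sum (M2 _)) scaler_sumr; apply: eq_bigr => j _.
  by rewrite (lfZ (M2 _)) scalerA mulrC.
have E2 : forall r : seq (H * H), \sum_(p <- r) M (al p.1) (be p.2) =
   \sum_(i < \dim (fullv : {vspace U1})) \sum_(j < \dim (fullv : {vspace U2}))
     (\sum_(p <- r) coord e1 i (al p.1) * coord e2 j (be p.2)) *: M e1`_i e2`_j.
  move=> r; under eq_bigr do rewrite E.
  rewrite exchange_big; apply: eq_bigr => i _.
  rewrite exchange_big; apply: eq_bigr => j _.
  by rewrite scaler_suml.
rewrite !E2; apply: eq_bigr => i _; apply: eq_bigr => j _.
by rewrite (st _ _ (coord_lfun e1 i alL) (coord_lfun e2 j beL)).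
Qed.

Lemma teq3_M (U1 U2 U3 : vectType CC) (X : lmodType CC) (s t : seq (H * H * H))
  (al : H -> U1) (be : H -> U2) (ga : H -> U3) (M : U1 -> U2 -> U3 -> X) :
  teq3 s t -> islin al -> islin be -> islin ga ->
  (forall w z, forall (a : CC) u v, M (a *: u + v) w z = a *: M u w z + M v w z) ->
  (forall w z, forall (a : CC) u v, M w (a *: u + v) z = a *: M w u z + M w v z) ->
  (forall w z, forall (a : CC) u v, M w z (a *: u + v) = a *: M w z u + M w z v) ->
  \sum_(p <- s) M (al p.1.1) (be p.1.2) (ga p.2) =
  \sum_(p <- t) M (al p.1.1) (be p.1.2) (ga p.2).
Proof.
move=> st alL beL gaL M1 M2 M3.
pose e1 := vbasis (fullv : {vspace U1}); pose e2 := vbasis (fullv : {vspace U2}).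
pose e3 := vbasis (fullv : {vspace U3}).
have E : forall a b c, M (al a) (be b) (ga c) =
   \sum_(i < \dim (fullv : {vspace U1})) \sum_(j < \dim (fullv : {vspace U2}))
   \sum_(k < \dim (fullv : {vspace U3}))
     (coord e1 i (al a) * coord e2 j (be b) * coord e3 k (ga c)) *: M e1`_i e2`_j e3`_k.
  move=> a b c; rewrite {1}(expand_vec (al a)) {1}(expand_vec (be b)) {1}(expand_vec (ga c)).
  rewrite (lf_sum (M1 _ _)); apply: eq_bigr => i _.
  rewrite (lfZ (M1 _ _)) (lf_sum (M2 _ _)) scaler_sumr; apply: eq_bigr => j _.
  rewrite (lfZ (M2 _ _)) (lf_sum (M3 _ _)) !scaler_sumr; apply: eq_bigr => k _.
  by rewrite (lfZ (M3 _ _)) !scalerA; congr (_ *: _); rewrite mulrC mulrA [_ * coord _ _ _]mulrC.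
have E2 : forall r : seq (H * H * H), \sum_(p <- r) M (al p.1.1) (be p.1.2) (ga p.2) =
   \sum_(i < \dim (fullv : {vspace U1})) \sum_(j < \dim (fullv : {vspace U2}))
   \sum_(k < \dim (fullv : {vspace U3}))
     (\sum_(p <- r) coord e1 i (al p.1.1) * coord e2 j (be p.1.2) * coord e3 k (ga p.2))
        *: M e1`_i e2`_j e3`_k.
  move=> r; under eq_bigr do rewrite E.
  rewrite exchange_big; apply: eq_bigr => i _.
  rewrite exchange_big; apply: eq_bigr => j _.
  rewrite exchange_big; apply: eq_bigr => k _.
  by rewrite scaler_suml.
rewrite !E2; apply: eq_bigr => i _; apply: eq_bigr => j _; apply: eq_bigr => k _.
by rewrite (st _ _ _ (coord_lfun e1 i alL) (coord_lfun e2 j beL) (coord_lfun e3 k gaL)).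
Qed.
End TeqM.

Section CompLemmas.
Variables (W : vectType CC).
Implicit Types (f g k : 'End(W)).
Lemma compZl (a : CC) f g : ((a *: f) \o g = a *: (f \o g))%VF.
Proof. by rewrite comp_lfunZl. Qed.
Lemma compZr (a : CC) f g : (f \o (a *: g) = a *: (f \o g))%VF.
Proof. by rewrite comp_lfunZr. Qed.
Lemma compLl g : forall (a : CC) (u v : 'End(W)), ((a *: u + v) \o g = a *: (u \o g) + (v \o g))%VF.
Proof. by move=> a u v; rewrite comp_lfunDl compZl. Qed.
Lemma compLr g : forall (a : CC) (u v : 'End(W)), (g \o (a *: u + v) = a *: (g \o u) + (g \o v))%VF.
Proof. by move=> a u v; rewrite comp_lfunDr compZr. Qed.
Lemma sumcompl I (r : seq I) (F : I -> 'End(W)) g :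
  ((\sum_(i <- r) F i) \o g = \sum_(i <- r) (F i \o g))%VF.
Proof. exact: (lf_sum (compLl g)). Qed.
Lemma sumcompr I (r : seq I) (F : I -> 'End(W)) g :
  (g \o (\sum_(i <- r) F i) = \sum_(i <- r) (g \o F i))%VF.
Proof. exact: (lf_sum (compLr g)). Qed.
End CompLemmas.

Ltac lin_tac := move=> *; rewrite ?(comp_lfunDl, comp_lfunDr, compZl, compZr) //.

Section Hopf.
Variables (H : algType CC) (D : H -> seq (H * H)) (eps : H -> CC) (S : H -> H).
Hypothesis hH : is_hopf D eps S.
Hypothesis hC : cocommutative D.
Variables (W : vectType CC) (rho : H -> 'End(W)).
Hypothesis hr : is_hmodule rho.

Lemma rhoL : islin rho. Proof. by case: hr. Qed.
Lemma rhoM x y : rho (x * y) = (rho x \o rho y)%VF. Proof. by case: hr. Qed.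
Lemma rho1 : rho 1 = \1%VF. Proof. by case: hr. Qed.
Lemma SL : islin S. Proof. exact: hopf_S_linear hH. Qed.

Definition th x := rho (S x).
Lemma thL : islin th.
Proof. by move=> a x y; rewrite /th SL rhoL. Qed.

Lemma islin_comp (U : lmodType CC) (g : H -> U) (f : H -> H) :
  islin f -> islin g -> islin (fun x => g (f x)).
Proof. by move=> fL gL a x y; rewrite fL gL. Qed.
Lemma islin_mulr (U : lmodType CC) (g : H -> U) c :
  islin g -> islin (fun a => g (a * c)).
Proof. by move=> gL a x y; rewrite mulrDl -scalerAl gL. Qed.
Lemma islin_mull (U : lmodType CC) (g : H -> U) c :
  islin g -> islin (fun a => g (c * a)).
Proof. by move=> gL a x y; rewrite mulrDr -scalerAr gL. Qed.

Lemma teq2_comp s t (al be : H -> 'End(W)) :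
  teq2 s t -> islin al -> islin be ->
  \sum_(p <- s) (al p.1 \o be p.2)%VF = \sum_(p <- t) (al p.1 \o be p.2)%VF.
Proof.
move=> st aL bL.
exact: (teq2_M (M := fun u v => (u \o v)%VF) st aL bL (@compLl W) (@compLr W)).
Qed.

Definition Tx x := [seq (p.1, q.1, q.2) | p <- D x, q <- D p.2].
Definition Tx' x := [seq (q.1, q.2, p.2) | p <- D x, q <- D p.1].

Lemma coassoc_M (U1 U2 U3 : vectType CC) (X : lmodType CC)
  (al : H -> U1) (be : H -> U2) (ga : H -> U3) (M : U1 -> U2 -> U3 -> X) x :
  islin al -> islin be -> islin ga ->
  (forall w z, forall (a : CC) u v, M (a *: u + v) w z = a *: M u w z + M v w z) ->
  (forall w z, forall (a : CC) u v, M w (a *: u + v) z = a *: M w u z + M w v z) ->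
  (forall w z, forall (a : CC) u v, M w z (a *: u + v) = a *: M w z u + M w z v) ->
  \sum_(t <- Tx x) M (al t.1.1) (be t.1.2) (ga t.2) =
  \sum_(t <- Tx' x) M (al t.1.1) (be t.1.2) (ga t.2).
Proof.
move=> aL bL gL M1 M2 M3.
exact: (teq3_M (hopf_coassoc hH x) aL bL gL M1 M2 M3).
Qed.

Lemma th1 : th 1 = \1%VF.
Proof.
have h := hopf_antipode_l hH 1; rewrite (hopf_eps_one hH) scale1r in h.
have := congr1 rho h; rewrite (lf_sum rhoL) rho1.
under eq_bigr do rewrite rhoM.
rewrite (teq2_comp (hopf_D_one hH) thL rhoL) big_seq1 /= rho1 comp_lfun1r.
done.
Qed.

Lemma rhoZ1 (c : CC) : rho (c *: 1) = c *: \1%VF.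
Proof. by rewrite (lfZ rhoL) rho1. Qed.

Lemma I_lem x y : \sum_(p <- D x) \sum_(q <- D y) (th (p.1 * q.1) \o rho (p.2 * q.2))%VF
  = (eps x * eps y) *: \1%VF.
Proof.
have h := hopf_antipode_l hH (x * y).
have := congr1 rho h; rewrite (lf_sum rhoL) rhoZ1 (hopf_eps_mul hH).
under eq_bigr do rewrite rhoM.
rewrite (teq2_comp (hopf_D_mul hH x y) thL rhoL) big_allpairs_dep /=.
done.
Qed.

Lemma antr x : \sum_(p <- D x) (rho p.1 \o th p.2)%VF = eps x *: \1%VF.
Proof.
have := congr1 rho (hopf_antipode_r hH x); rewrite (lf_sum rhoL) rhoZ1.
by under eq_bigr do rewrite rhoM.
Qed.

Lemma antl x : \sum_(p <- D x) (th p.1 \o rho p.2)%VF = eps x *: \1%VF.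
Proof.
have := congr1 rho (hopf_antipode_l hH x); rewrite (lf_sum rhoL) rhoZ1.
by under eq_bigr do rewrite rhoM.
Qed.

Lemma II_lem x y :
  \sum_(p <- D x) \sum_(q <- D y) (rho (p.1 * q.1) \o th q.2 \o th p.2)%VF
  = (eps x * eps y) *: \1%VF.
Proof.
transitivity (\sum_(p <- D x) ((rho p.1 \o (\sum_(q <- D y) (rho q.1 \o th q.2))) \o th p.2)%VF).
  apply: eq_bigr => p _; rewrite sumcompr sumcompl; apply: eq_bigr => q _.
  by rewrite rhoM comp_lfunA.
rewrite antr; under eq_bigr do rewrite compZr compZl comp_lfun1r.
by rewrite -scaler_sumr antr scalerA mulrC.
Qed.

Lemma th_antimul x y : th (x * y) = (th y \o th x)%VF.
Proof.
pose F (t u : H * H * H) := (th (t.1.1 * u.1.1) \o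
   (rho (t.1.2 * u.1.2) \o th u.2 \o th t.2))%VF.
transitivity (\sum_(t <- Tx x) \sum_(u <- Tx y) F t u).
  rewrite -{1}(hopf_counit_r hH x) -{1}(hopf_counit_r hH y) mulr_suml (lf_sum thL).
  rewrite /Tx big_allpairs_dep /=; apply: eq_bigr => p _.
  rewrite mulr_sumr (lf_sum thL).
  under [RHS]eq_bigr do rewrite big_allpairs_dep /=.
  rewrite exchange_big /=; apply: eq_bigr => q _.
  rewrite -scalerAl -scalerAr !(lfZ thL) scalerA.
  rewrite -[th _ in LHS]comp_lfun1r -compZr -II_lem sumcompr.
  by apply: eq_bigr => p' _; rewrite sumcompr.
rewrite exchange_big /=.
transitivity (\sum_(u <- Tx y) \sum_(t <- Tx' x) F t u).
  apply: eq_bigr => u _; rewrite /F.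
  apply: (coassoc_M (al := fun a => th (a * u.1.1)) (be := fun b => rho (b * u.1.2))
    (ga := th) (M := fun a b c => (a \o (b \o th u.2 \o c))%VF)).
  - exact: islin_mulr thL.
  - exact: islin_mulr rhoL.
  - exact: thL.
  all: lin_tac.
rewrite exchange_big /=.
transitivity (\sum_(t <- Tx' x) \sum_(u <- Tx' y) F t u).
  apply: eq_bigr => t _; rewrite /F.
  apply: (coassoc_M (al := fun a => th (t.1.1 * a)) (be := fun b => rho (t.1.2 * b))
    (ga := th) (M := fun a b c => (a \o (b \o c \o th t.2))%VF)).
  - exact: islin_mull thL.
  - exact: islin_mull rhoL.
  - exact: thL.
  all: lin_tac.
rewrite /Tx' big_allpairs_dep /=.
transitivity (\sum_(p <- D x) \sum_(q <- D y)
   ((\sum_(p' <- D p.1) \sum_(q' <- D q.1) (th (p'.1 * q'.1) \o rho (p'.2 * q'.2)))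
      \o th q.2 \o th p.2)%VF).
  apply: eq_bigr => p _; under eq_bigr do rewrite big_allpairs_dep /=.
  rewrite exchange_big /=.
  apply: eq_bigr => q _; rewrite !sumcompl; apply: eq_bigr => p' _.
  rewrite !sumcompl; apply: eq_bigr => q' _.
  by rewrite /F /= !comp_lfunA.
under eq_bigr do under eq_bigr do rewrite I_lem !compZl comp_lfun1l.
rewrite -{2}(hopf_counit_l hH x) -{2}(hopf_counit_l hH y) !(lf_sum thL) sumcompr.
apply: eq_bigr => p _; rewrite sumcompl; apply: eq_bigr => q _.
by rewrite !(lfZ thL) compZl compZr scalerA mulrC.
Qed.

Lemma III_lem x : \sum_(p <- D x) (th (S p.1) \o th p.2)%VF = eps x *: \1%VF.
Proof.
rewrite (teq2_comp (hC x) (islin_comp SL thL) thL) big_map /=.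
under eq_bigr do rewrite -th_antimul.
by rewrite -(lf_sum thL) (hopf_antipode_r hH) (lfZ thL) th1.
Qed.

Lemma rhoS2 h : rho (S (S h)) = rho h.
Proof.
have sL : islin (fun x => th (S x)) := islin_comp SL thL.
rewrite -[h in LHS](hopf_counit_r hH) -/(th (S _)) (lf_sum sL).
transitivity (\sum_(t <- Tx h) (th (S t.1.1) \o th t.1.2 \o rho t.2)%VF).
  rewrite /Tx big_allpairs_dep /=; apply: eq_bigr => p _.
  rewrite (lfZ sL) -{1}[th (S p.1)]comp_lfun1r -compZr -antl sumcompr.
  by apply: eq_bigr => q _; rewrite comp_lfunA.
transitivity (\sum_(t <- Tx' h) (th (S t.1.1) \o th t.1.2 \o rho t.2)%VF).
  apply: (coassoc_M (al := fun x => th (S x)) (be := th) (ga := rho)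
    (M := fun a b c => (a \o b \o c)%VF) h sL thL rhoL); lin_tac.
rewrite /Tx' big_allpairs_dep /=.
rewrite -[h in RHS](hopf_counit_l hH) (lf_sum rhoL); apply: eq_bigr => p _.
by rewrite -sumcompl III_lem compZl comp_lfun1l (lfZ rhoL).
Qed.

End Hopf.

Lemma linfunE' (aT rT : vectType CC) (f : aT -> rT) :
  (forall (a : CC) u v, f (a *: u + v) = a *: f u + f v) -> forall u, (linfun f) u = f u.
Proof.
move=> fL u.
pose lf : {linear aT -> rT} := HB.pack f (GRing.isLinear.Build CC aT rT *:%R f fL).
exact: (lfunE lf u).
Qed.

Lemma dual_actE (H : algType CC) (S : H -> H) (W : vectType CC) (act : H -> 'End(W)) h f :
  dual_act S act h f = (f \o act (S h))%VF.
Proof. by rewrite /dual_act linfunE' // => a u v; rewrite comp_lfunDl comp_lfunZl. Qed.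

Lemma sum_actE (H : algType CC) (V W : vectType CC) (aV : H -> 'End(V)) (aW : H -> 'End(W)) h p :
  sum_act aV aW h p = (aV h p.1, aW h p.2).
Proof. by rewrite /sum_act linfunE' // => a u v /=; rewrite !linearP. Qed.

Lemma functional_sep (W : vectType CC) (w : W) :
  (forall f : 'Hom(W, CC^o), f w = 0) -> w = 0.
Proof.
move=> h; rewrite (expand_vec w) big1 // => i _.
have := h (linfun (fun x : W => (coord (vbasis fullv) i x : CC^o))).
by rewrite lfunE /= => ->; rewrite scale0r.
Qed.

Section Converse.
Variables (H : algType CC) (D : H -> seq (H * H)) (eps : H -> CC) (S : H -> H).
Hypothesis hH : is_hopf D eps S.
Hypothesis hC : cocommutative D.
Variables (V W : vectType CC) (act : H -> 'End(V)) (actW : H -> 'End(W)).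
Hypothesis hW : is_hmodule actW.
Variable phi : 'Hom(V, (W * dual_space W)%type).
Hypothesis phib : bijective phi.
Hypothesis phiI : forall h, (phi \o act h = sum_act actW (dual_act S actW) h \o phi)%VF.

Definition Bpm (sg : CC) (x y : (W * dual_space W)%type) : CC :=
  y.2 x.1 + sg * x.2 y.1.
Definition bpm sg (v w : V) := Bpm sg (phi v) (phi w).

Lemma bpm_bil sg : bilinear_form (bpm sg).
Proof.
have sE : forall (a : CC) (x : CC^o), a *: x = a * x by [].
split=> a u v w; rewrite /bpm /Bpm linearP /=.
  by rewrite linearP add_lfunE scale_lfunE /= !sE; ring.
by rewrite add_lfunE scale_lfunE linearP /= !sE; ring.
Qed.

Lemma phi_inj : injective phi. Proof. exact: bij_inj. Qed.

Lemma bpm_nd sg : sg != 0 -> nondegenerate_form (bpm sg).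
Proof.
move=> sg0; have [psi phiK psiK] := phib.
split.
- move=> v hv; apply: phi_inj; rewrite linear0.
  have hB : forall y, Bpm sg (phi v) y = 0.
    by move=> y; rewrite -[y]psiK; exact: hv.
  case E: (phi v) => [x1 x2]; congr (_, _).
  + apply: functional_sep => f; have := hB (0, f); rewrite E /Bpm /= linear0 mulr0 addr0.
    done.
  + apply/lfunP => w; rewrite zero_lfunE; have := hB (w, 0).
    rewrite E /Bpm /= zero_lfunE add0r => /eqP; rewrite mulf_eq0 (negPf sg0) /=.
    by move/eqP.
- move=> v hv; apply: phi_inj; rewrite linear0.
  have hB : forall y, Bpm sg y (phi v) = 0.
    by move=> y; rewrite -[y]psiK; exact: hv.
  case E: (phi v) => [x1 x2]; congr (_, _).
  + apply: functional_sep => f; have := hB (0, f); rewrite E /Bpm /= linear0 add0r.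
    by move/eqP; rewrite mulf_eq0 (negPf sg0) /= => /eqP.
  + apply/lfunP => w; rewrite zero_lfunE; have := hB (w, 0).
    by rewrite E /Bpm /= zero_lfunE mulr0 addr0.
Qed.

Lemma phi_act h v : phi (act h v) = (actW h (phi v).1, ((phi v).2 \o actW (S h))%VF).
Proof.
have := phiI h; move/lfunP/(_ v); rewrite !comp_lfunE => ->.
by rewrite sum_actE dual_actE.
Qed.

Lemma bpm_inv sg : hinvariant S act (bpm sg).
Proof.
move=> h v w; rewrite /bpm !phi_act /Bpm /= !comp_lfunE.
by rewrite (rhoS2 hH hC hW).
Qed.

Lemma converse_dir :
  (exists b : V -> V -> CC,
        [/\ bilinear_form b, nondegenerate_form b, sym_bilin_form b
          & hinvariant S act b]) /\
     (exists b : V -> V -> CC,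
        [/\ bilinear_form b, nondegenerate_form b, skew_bilin_form b
          & hinvariant S act b]).
Proof.
split.
- exists (bpm 1); split; [exact: bpm_bil | apply: bpm_nd; exact: oner_neq0 | | exact: bpm_inv].
  by move=> v w; rewrite /bpm /Bpm !mul1r addrC.
- exists (bpm (-1)); split; [exact: bpm_bil | apply: bpm_nd; by rewrite oppr_eq0 oner_neq0 | | exact: bpm_inv].
  by move=> v w; rewrite /bpm /Bpm !mulN1r opprD opprK addrC.
Qed.
End Converse.

Section Peval.
Variables (V : vectType CC) (A : 'End(V)).

Definition lpow n := iter n (fun X => A \o X)%VF \1%VF.
Definition peval (r : {poly CC}) : 'End(V) := \sum_(i < size r) r`_i *: lpow i.

Lemma peval_widen (r : {poly CC}) n : (size r <= n)%N -> peval r = \sum_(i < n) r`_i *: lpow i.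
Proof.
move=> le; rewrite /peval (big_ord_widen n (fun i => r`_i *: lpow i) le) big_mkcond.
apply: eq_bigr => i _; case: ifP => // /negbT; rewrite -leqNgt => h.
by rewrite nth_default // scale0r.
Qed.

Lemma pevalD r s : peval (r + s) = peval r + peval s.
Proof.
rewrite (@peval_widen _ (maxn (size r) (size s))); last exact: size_polyD.
rewrite (@peval_widen r (maxn (size r) (size s))) ?leq_maxl //.
rewrite (@peval_widen s (maxn (size r) (size s))) ?leq_maxr //.
by rewrite -big_split; apply: eq_bigr => i _; rewrite coefD scalerDl.
Qed.

Lemma pevalZ c r : peval (c *: r) = c *: peval r.
Proof.
rewrite (@peval_widen _ (size r)) ?size_scale_leq // /peval scaler_sumr.
by apply: eq_bigr => i _; rewrite coefZ scalerA.
Qed.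

Lemma pevalN r : peval (- r) = - peval r.
Proof. by rewrite -scaleN1r pevalZ scaleN1r. Qed.

Lemma pevalB r s : peval (r - s) = peval r - peval s.
Proof. by rewrite pevalD pevalN. Qed.

Lemma pevalC c : peval c%:P = c *: \1%VF.
Proof.
rewrite (@peval_widen _ 1) ?size_polyC ?leq_b1 // big_ord1 coefC /=.
done.
Qed.

Lemma peval0 : peval 0 = 0.
Proof. by rewrite /peval size_poly0 big_ord0. Qed.

Lemma peval1 : peval 1 = \1%VF.
Proof. by rewrite pevalC scale1r. Qed.

Lemma pevalXM r : peval ('X * r) = (A \o peval r)%VF.
Proof.
rewrite (@peval_widen _ (size r).+1); last first.
  have [->|nz] := eqVneq r 0; first by rewrite mulr0 size_poly0.
  by rewrite mulrC size_mulX.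
rewrite big_ord_recl coefXM eqxx scale0r add0r /peval sumcompr.
apply: eq_bigr => i _; rewrite coefXM /= compZr /=.
by [].
Qed.

Lemma pevalX : peval 'X = A.
Proof. by rewrite -[X in peval X]mulr1 pevalXM peval1 comp_lfun1r. Qed.

Lemma pevalM r s : peval (r * s) = (peval r \o peval s)%VF.
Proof.
elim/poly_ind: r => [|r c IH]; first by rewrite mul0r peval0 comp_lfun0l.
rewrite mulrDl (_ : r * 'X * s = 'X * (r * s)); last by rewrite mulrAC mulrC.
rewrite pevalD pevalXM IH mul_polyC pevalZ.
rewrite pevalD [r * 'X]mulrC pevalXM pevalC comp_lfunDl comp_lfunA.
by rewrite -comp_lfunZl comp_lfun1l.
Qed.

Lemma peval_comm r s : (peval r \o peval s = peval s \o peval r)%VF.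
Proof. by rewrite -!pevalM mulrC. Qed.

Lemma pevalA_comm r : (A \o peval r = peval r \o A)%VF.
Proof. by have := peval_comm 'X r; rewrite pevalX. Qed.

Lemma peval_comm_with (B : 'End(V)) r : (B \o A = A \o B)%VF -> (B \o peval r = peval r \o B)%VF.
Proof.
move=> hB; elim/poly_ind: r => [|r c IH]; first by rewrite peval0 comp_lfun0l comp_lfun0r.
rewrite pevalD mulrC pevalXM pevalC comp_lfunDl comp_lfunDr -comp_lfunZr -comp_lfunZl.
rewrite comp_lfun1l comp_lfun1r; congr (_ + _).
by rewrite comp_lfunA hB -!comp_lfunA IH.
Qed.

End Peval.

From Stdlib Require Import Classical.

Lemma ann_poly (V : vectType CC) (A : 'End(V)) : exists2 p : {poly CC}, p != 0 & peval A p = 0.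
Proof.
set N := dim 'End(V).
pose X := [tuple lpow A i | i < N.+1].
have nf : ~~ free X.
  apply/negP; rewrite /free size_tuple => /eqP h.
  have := dimvS (subvf <<X>>%VS); rewrite h dimvf.
  by rewrite -/N ltnn.
have nall : ~ (forall k : 'I_N.+1 -> CC, \sum_(i < N.+1) k i *: X`_i = 0 -> forall i, k i = 0).
  by move=> h; apply: (negP nf); apply/freeP.
have [k hk] := not_all_ex_not _ _ nall.
have [hs hnz] := imply_to_and _ _ hk.
have [i hi] := not_all_ex_not _ _ hnz.
exists (\poly_(j < N.+1) k (inord j)).
  apply/eqP => /(congr1 (fun q : {poly CC} => q`_i)); rewrite coef_poly ltn_ord coef0.
  by rewrite inord_val.
rewrite (@peval_widen _ _ _ N.+1) ?size_poly // -[RHS]hs.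
apply: eq_bigr => j _; rewrite coef_poly ltn_ord inord_val.
by rewrite nth_mktuple.
Qed.

Definition pos (z : CC) : bool :=
  if complex.Re z == 0 then 0 < complex.Im z else 0 < complex.Re z.

Lemma ReN (z : CC) : complex.Re (- z) = - complex.Re z. Proof. by case: z. Qed.
Lemma ImN (z : CC) : complex.Im (- z) = - complex.Im z. Proof. by case: z. Qed.

Lemma pos_opp z : pos z -> ~~ pos (- z).
Proof.
rewrite /pos ReN ImN oppr_eq0 !oppr_gt0.
by case: eqP => _ h; rewrite -leNgt ltW.
Qed.

Lemma pos_or z : z != 0 -> pos z || pos (- z).
Proof.
rewrite /pos ReN ImN oppr_eq0 !oppr_gt0.
case: z => a b /= nz; case: eqP => [a0|/eqP an]; rewrite orbC -neq_lt //.
by apply/eqP => b0; move: nz; rewrite a0 b0 eqxx.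
Qed.

Lemma root_prod_filter (rs : seq CC) (P : pred CC) x :
  root (\prod_(z <- rs | P z) ('X - z%:P)) x = (x \in rs) && P x.
Proof. by rewrite -big_filter root_prod_XsubC mem_filter andbC. Qed.

Lemma root_prod_filter' (rs : seq CC) (P : pred CC) x :
  ((\prod_(z <- rs | P z) ('X - z%:P)).[x] == 0) = (x \in rs) && P x.
Proof. exact: root_prod_filter. Qed.

Lemma hornerNX (q : {poly CC}) x : (q \Po - 'X).[x] = q.[- x].
Proof. by rewrite horner_comp hornerN hornerX. Qed.

Section Split.
Variables (V : vectType CC) (A : 'End(V)).
Hypothesis Ainj : injective A.

Lemma inj_prod (s : seq CC) : (forall z, z \in s -> injective (A - z *: \1)%VF) ->
  injective (peval A (\prod_(z <- s) ('X - z%:P))).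
Proof.
elim: s => [|z s IH] hs; first by rewrite big_nil peval1 => u v; rewrite !id_lfunE.
rewrite big_cons pevalM pevalB pevalX pevalC => u v; rewrite !comp_lfunE.
move/(hs z (mem_head _ _)); apply: IH => y ys; apply: hs.
by rewrite in_cons ys orbT.
Qed.

Lemma split_poly : exists q1 q2 : {poly CC},
  [/\ peval A (q1 * q2) = 0, coprimep q1 q2, coprimep q1 (q1 \Po - 'X)
    & coprimep q2 (q2 \Po - 'X)].
Proof.
have [p pn0 pA] := ann_poly A.
have [rs prs] := closed_field_poly_normal p.
pose q1 := \prod_(z <- rs | pos z) ('X - z%:P).
pose q2 := \prod_(z <- rs | pos (- z)) ('X - z%:P).
pose q0 := \prod_(z <- rs | z == 0) ('X - z%:P).
have fact : \prod_(z <- rs) ('X - z%:P) = q1 * (q2 * q0).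
  rewrite (bigID pos) /=; congr (_ * _).
  rewrite (bigID (fun z => pos (- z))) /=; congr (_ * _).
    apply: eq_bigl => z; case h: (pos (- z)); rewrite ?andbF ?andbT //.
    by have := pos_opp h; rewrite opprK.
  apply: eq_bigl => z; case: (eqVneq z 0) => [->|nz].
    have p0 : ~~ pos 0 by rewrite /pos /= eqxx ltxx.
    by rewrite oppr0 (negPf p0).
  by have := pos_or nz; case: (pos z); case: (pos (- z)).
exists q1, q2; split.
- apply/lfunP => v; rewrite zero_lfunE.
  have i0 : injective (peval A q0).
    rewrite /q0 -big_filter; apply: inj_prod => z; rewrite mem_filter => /andP[/eqP -> _].
    by rewrite scale0r subr0.
  apply: i0; rewrite linear0.
  have : peval A p = 0 := pA.
  rewrite {1}prs pevalZ fact => /eqP; rewrite scaler_eq0 lead_coef_eq0 (negPf pn0) /=.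
  move=> /eqP/lfunP/(_ v); rewrite zero_lfunE mulrA mulrC !pevalM !comp_lfunE.
  by [].
- apply: Pdiv.ClosedField.root_coprimep => x; rewrite /q1 /q2 root_prod_filter.
  move=> /andP[_ h1]; rewrite root_prod_filter'; apply/negP => /andP[_ h2].
  by have := pos_opp h1; rewrite h2.
- apply: Pdiv.ClosedField.root_coprimep => x; rewrite /q1 root_prod_filter.
  move=> /andP[_ h1]; rewrite hornerNX root_prod_filter'; apply/negP => /andP[_ h2].
  by have := pos_opp h1; rewrite h2.
- apply: Pdiv.ClosedField.root_coprimep => x; rewrite /q2 root_prod_filter.
  move=> /andP[_ h1]; rewrite hornerNX root_prod_filter' opprK; apply/negP => /andP[_ h2].
  by have := pos_opp h2; rewrite h1.
Qed.
End Split.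

Section Bil.
Variables (V : vectType CC) (b : V -> V -> CC).
Hypothesis hb : bilinear_form b.
Lemma bL w : forall (a : CC) (u v : V), (b (a *: u + v) w : CC^o) = a *: (b u w : CC^o) + b v w.
Proof. by case: hb. Qed.
Lemma bR w : forall (a : CC) (u v : V), (b w (a *: u + v) : CC^o) = a *: (b w u : CC^o) + b w v.
Proof. by case: hb. Qed.
Lemma bD1 u v w : b (u + v) w = b u w + b v w. Proof. exact: (lfD (bL w)). Qed.
Lemma bZ1 a u w : b (a *: u) w = a * b u w. Proof. exact: (lfZ (bL w)). Qed.
Lemma bN1 u w : b (- u) w = - b u w. Proof. exact: (lfN (bL w)). Qed.
Lemma bB1 u v w : b (u - v) w = b u w - b v w. Proof. exact: (lfB (bL w)). Qed.
Lemma b01 w : b 0 w = 0. Proof. exact: (lf0 (bL w)). Qed.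
Lemma bD2 u v w : b w (u + v) = b w u + b w v. Proof. exact: (lfD (bR w)). Qed.
Lemma bZ2 a u w : b w (a *: u) = a * b w u. Proof. exact: (lfZ (bR w)). Qed.
Lemma bN2 u w : b w (- u) = - b w u. Proof. exact: (lfN (bR w)). Qed.
Lemma bB2 u v w : b w (u - v) = b w u - b w v. Proof. exact: (lfB (bR w)). Qed.
Lemma b02 w : b w 0 = 0. Proof. exact: (lf0 (bR w)). Qed.

Definition Tb : 'Hom(V, 'Hom(V, CC^o)) :=
  linfun (fun v => linfun (fun w => (b v w : CC^o))).
Lemma TbE v w : Tb v w = b v w.
Proof.
rewrite /Tb linfunE'; first by rewrite linfunE' //; exact: bR.
move=> a u u'; apply/lfunP => w'; rewrite add_lfunE scale_lfunE !linfunE' //; try exact: bR.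
exact: bL.
Qed.

Definition Psi (U : {vspace V}) : 'Hom(V, 'Hom(subvs_of U, CC^o)) :=
  linfun (fun v => linfun (fun w : subvs_of U => (b v (vsval w) : CC^o))).
Lemma PsiE U v w : Psi U v w = b v (vsval w).
Proof.
have hR : forall v, forall (a : CC) (u u' : subvs_of U),
   (b v (vsval (a *: u + u')) : CC^o) = a *: (b v (vsval u) : CC^o) + b v (vsval u').
  by move=> v' a u u'; rewrite linearP /=; exact: bR.
rewrite /Psi linfunE'; first by rewrite linfunE' //.
move=> a u u'; apply/lfunP => w'; rewrite add_lfunE scale_lfunE !linfunE' //.
exact: bL.
Qed.
End Bil.

Section Forward.
Variables (H : algType CC) (S : H -> H) (V : vectType CC) (act : H -> 'End(V)).
Hypothesis ha : is_hmodule act.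
Variables (b1 b2 : V -> V -> CC).
Hypotheses (b1bil : bilinear_form b1) (b1nd : nondegenerate_form b1)
  (b1sym : sym_bilin_form b1) (b1inv : hinvariant S act b1).
Hypotheses (b2bil : bilinear_form b2) (b2nd : nondegenerate_form b2)
  (b2skew : skew_bilin_form b2) (b2inv : hinvariant S act b2).

Lemma nd1 v : (forall w, b1 v w = 0) -> v = 0. Proof. by case: b1nd => h _; exact: h. Qed.

Lemma T1inj : lker (Tb b1) == 0%VS.
Proof.
apply/lker0P => u v /lfunP h; apply/eqP; rewrite -subr_eq0; apply/eqP; apply: nd1 => w.
by have := h w; rewrite !(TbE b1bil) => e; rewrite (bB1 b1bil) e subrr.
Qed.

Lemma T1img : limg (Tb b1) = fullv.
Proof.
apply/eqP; rewrite eqEdim subvf /= limg_dim_eq; last by rewrite (eqP T1inj) capv0.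
by rewrite !dimvf /dim /= muln1.
Qed.

Definition A : 'End(V) := locked ((Tb b1)^-1 \o Tb b2)%VF.

Lemma AE v w : b1 (A v) w = b2 v w.
Proof.
rewrite -(TbE b1bil) /A -lock comp_lfunE limg_lfunVK ?(TbE b2bil) // T1img memvf //.
Qed.

Lemma Aact h : (A \o act h = act h \o A)%VF.
Proof.
apply/lfunP => v; rewrite !comp_lfunE; apply/eqP; rewrite -subr_eq0; apply/eqP.
apply: nd1 => w; rewrite (bB1 b1bil) AE b2inv b1inv AE subrr //.
Qed.

Lemma Askew v w : b1 v (A w) = - b1 (A v) w.
Proof. by rewrite b1sym !AE b2skew. Qed.

Lemma Ainj : injective A.
Proof.
move=> u v h; apply/eqP; rewrite -subr_eq0; apply/eqP.
case: b2nd => nd2 _; apply: nd2 => w; rewrite (bB1 b2bil) -!AE h subrr //.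
Qed.

Lemma adjoint r v w : b1 v (peval A r w) = b1 (peval A (r \Po - 'X) v) w.
Proof.
elim/poly_ind: r v w => [|r c IH] v w.
  by rewrite comp_poly0 !peval0 !zero_lfunE (b02 b1bil) (b01 b1bil).
rewrite comp_polyD comp_polyM comp_polyX comp_polyC.
rewrite !pevalD [r * 'X]mulrC pevalXM mulrN pevalN mulrC pevalXM !pevalC.
rewrite !add_lfunE !scale_lfunE !id_lfunE !comp_lfunE opp_lfunE !comp_lfunE.
rewrite (bD2 b1bil) (bD1 b1bil) (bZ2 b1bil) (bZ1 b1bil) Askew IH (bN1 b1bil).
have := pevalA_comm A (r \Po - 'X); move/lfunP/(_ v); rewrite !comp_lfunE => ->.
done.
Qed.

Lemma iso_ker q : coprimep q (q \Po - 'X) ->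
  forall v w, peval A q v = 0 -> peval A q w = 0 -> b1 v w = 0.
Proof.
move=> /Bezout_eq1_coprimepP [[u1 u2] /= hu] v w hv hw.
have -> : w = peval A (u1 * q + u2 * (q \Po - 'X)) w by rewrite hu peval1 id_lfunE.
rewrite pevalD add_lfunE (bD2 b1bil) pevalM comp_lfunE hw linear0 (b02 b1bil) add0r.
have NN : (- 'X) \Po (- 'X) = 'X :> {poly CC}.
  by rewrite -[- 'X]sub0r comp_polyB comp_poly0 comp_polyX !sub0r opprK.
rewrite adjoint comp_polyM -comp_polyA NN comp_polyXr.
by rewrite pevalM comp_lfunE hv linear0 (b01 b1bil).
Qed.

Lemma dim_le (X Y : {vspace V}) :
  (forall u, exists2 x, x \in X & u - x \in Y) ->
  (forall y y', y \in Y -> y' \in Y -> b1 y y' = 0) ->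
  (\dim Y <= \dim X)%N.
Proof.
move=> dec isoY.
have cap0 : (Y :&: lker (Psi b1 X))%VS = 0%VS.
  apply/eqP; rewrite -subv0; apply/subvP => v /memv_capP [vY]; rewrite memv_ker => /eqP h0.
  rewrite memv0; apply/eqP; apply: nd1 => u.
  have [x xX ux] := dec u.
  rewrite -[u](subrK x) (bD2 b1bil) isoY // add0r.
  move/lfunP: h0 => /(_ (vsproj X x)).
  by rewrite (PsiE b1bil) zero_lfunE vsprojK.
have := dimvS (subvf (Psi b1 X @: Y)%VS); rewrite limg_dim_eq // dimvf /dim /= muln1.
done.
Qed.

Section WithQ.
Variables (q1 q2 u1 u2 : {poly CC}).
Hypothesis hq : peval A (q1 * q2) = 0.
Hypothesis hu : u1 * q1 + u2 * q2 = 1.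
Hypothesis c1 : coprimep q1 (q1 \Po - 'X).
Hypothesis c2 : coprimep q2 (q2 \Po - 'X).

Definition E := peval A (u2 * q2).
Definition F := peval A (u1 * q1).
Definition W1 := lker (peval A q1).
Definition W2 := lker (peval A q2).

Lemma EF v : E v + F v = v.
Proof. by rewrite /E /F -add_lfunE -pevalD addrC hu peval1 id_lfunE. Qed.

Lemma EW1 v : E v \in W1.
Proof.
rewrite memv_ker /E -comp_lfunE -pevalM mulrA [q1 * u2]mulrC -mulrA pevalM comp_lfunE.
by rewrite hq zero_lfunE linear0.
Qed.

Lemma FW2 v : F v \in W2.
Proof.
rewrite memv_ker /F -comp_lfunE -pevalM mulrA [q2 * u1]mulrC -mulrA [q2 * q1]mulrC.
by rewrite pevalM comp_lfunE hq zero_lfunE linear0.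
Qed.

Lemma iso1 y y' : y \in W1 -> y' \in W1 -> b1 y y' = 0.
Proof. by rewrite !memv_ker => /eqP h /eqP h'; exact: iso_ker c1 _ _ h h'. Qed.
Lemma iso2 y y' : y \in W2 -> y' \in W2 -> b1 y y' = 0.
Proof. by rewrite !memv_ker => /eqP h /eqP h'; exact: iso_ker c2 _ _ h h'. Qed.

Lemma Ecomm h : (E \o act h = act h \o E)%VF.
Proof. by rewrite /E; apply/esym/peval_comm_with/esym/Aact. Qed.

Lemma W1stable h v : v \in W1 -> act h v \in W1.
Proof.
rewrite !memv_ker => /eqP h0.
have := peval_comm_with q1 (esym (Aact h)); move/lfunP/(_ v); rewrite !comp_lfunE h0 linear0.
by move=> <-.
Qed.

Lemma dimW : (\dim W1 = \dim W2)%N.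
Proof.
apply/eqP; rewrite eqn_leq; apply/andP; split.
  apply: dim_le; last exact: iso1.
  by move=> u; exists (F u); [exact: FW2 | rewrite -{1}(EF u) addrK; exact: EW1].
apply: dim_le; last exact: iso2.
by move=> u; exists (E u); [exact: EW1 | rewrite -{1}(EF u) addrAC subrr add0r; exact: FW2].
Qed.

Lemma dimsum : (\dim W1 + \dim W2)%N = dim V.
Proof.
rewrite -dimv_sum_cap.
have -> : (W1 + W2)%VS = fullv.
  apply/eqP; rewrite eqEsubv subvf; apply/subvP => u _; rewrite -(EF u).
  by apply: memv_add; [exact: EW1 | exact: FW2].
have -> : (W1 :&: W2)%VS = 0%VS.
  apply/eqP; rewrite -subv0; apply/subvP => v /memv_capP [].
  rewrite !memv_ker memv0 => /eqP h1 /eqP h2; rewrite -(EF v) /E /F !pevalM !comp_lfunE.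
  by rewrite h1 h2 !linear0 addr0.
by rewrite dimv0 addn0 dimvf.
Qed.

Definition actW (h : H) : 'End(subvs_of W1) :=
  linfun (fun w : subvs_of W1 => vsproj W1 (act h (vsval w))).

Lemma actWE h w : vsval (actW h w) = act h (vsval w).
Proof.
rewrite /actW linfunE'; first by rewrite vsprojK // W1stable // subvsP.
by move=> a x y; rewrite !linearP.
Qed.

Lemma actW_hmod : is_hmodule actW.
Proof.
case: ha => aL aM a1; split.
- move=> a x y; apply/lfunP => w; apply: subvs_inj.
  by rewrite add_lfunE scale_lfunE linearP /= !actWE aL add_lfunE scale_lfunE.
- move=> x y; apply/lfunP => w; apply: subvs_inj.
  by rewrite comp_lfunE !actWE aM comp_lfunE.
- apply/lfunP => w; apply: subvs_inj.
  by rewrite actWE a1 !id_lfunE.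
Qed.

Definition phi : 'Hom(V, (subvs_of W1 * dual_space (subvs_of W1))%type) :=
  linfun (fun v => (vsproj W1 (E v), Psi b1 W1 v)).

Lemma phiE v : phi v = (vsproj W1 (E v), Psi b1 W1 v).
Proof. by rewrite /phi linfunE' // => a x y; rewrite !linearP. Qed.

Lemma phi_inter h : (phi \o act h = sum_act actW (dual_act S actW) h \o phi)%VF.
Proof.
apply/lfunP => v; rewrite !comp_lfunE sum_actE dual_actE !phiE /=; congr (_, _).
  apply: subvs_inj; rewrite actWE !vsprojK ?EW1 //.
  by have := Ecomm h; move/lfunP/(_ v); rewrite !comp_lfunE.
apply/lfunP => w; rewrite comp_lfunE !(PsiE b1bil) actWE.
exact: b1inv.
Qed.

Lemma phiF_inj : lker phi == 0%VS.
Proof.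
apply/lker0P => x y /eqP; rewrite -subr_eq0 -linearB => /eqP.
suff hv : forall v, phi v = 0 -> v = 0 by move/hv/eqP; rewrite subr_eq0 => /eqP.
move=> v; rewrite phiE => -[hE hP].
have Ev0 : E v = 0 by rewrite -(vsprojK (EW1 v)) hE linear0.
have vW2 : v \in W2 by rewrite -(EF v) Ev0 add0r; exact: FW2.
apply: nd1 => u; rewrite -(EF u) (bD2 b1bil) (iso2 vW2 (FW2 u)) addr0.
move/lfunP: hP => /(_ (vsproj W1 (E u))).
by rewrite (PsiE b1bil) zero_lfunE vsprojK ?EW1.
Qed.

Lemma phi_bij : bijective phi.
Proof.
have himg : limg phi = fullv.
  apply/eqP; rewrite eqEdim subvf /= limg_dim_eq; last by rewrite (eqP phiF_inj) capv0.
  have d1 : dim (subvs_of W1 * dual_space (subvs_of W1))%type = (\dim W1 + \dim W1 * 1)%N by [].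
  by rewrite !dimvf d1 muln1 -dimsum dimW.
exists (phi^-1)%VF; first exact: lker0_lfunK phiF_inj.
by move=> y; rewrite limg_lfunVK // himg memvf.
Qed.

End WithQ.

Lemma forward_dir :
  exists (W : vectType CC) (actW : H -> 'End(W)),
    is_hmodule actW /\ hmod_iso act (sum_act actW (dual_act S actW)).
Proof.
have [q1 [q2 [hq c12 c1 c2]]] := split_poly Ainj.
have [[u1 u2] /= hu] := Bezout_eq1_coprimepP _ _ c12.
exists (subvs_of (W1 q1)), (actW q1); split.
  exact: actW_hmod.
exists (phi q1 q2 u2); split.
  exact: (phi_bij hq hu c1 c2).
exact: (phi_inter u2 hq).
Qed.

End Forward.

Unset Implicit Arguments.
Set Strict Implicit.

Theorem mainTheorem10 (H : algType CC) (D : H -> seq (H * H)) (eps : H -> CC)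
    (S : H -> H) :
  is_hopf D eps S -> cocommutative D ->
  forall (V : vectType CC) (act : H -> 'End(V)),
    is_hmodule act -> completely_reducible act ->
    ((exists b : V -> V -> CC,
        [/\ bilinear_form b, nondegenerate_form b, sym_bilin_form b
          & hinvariant S act b]) /\
     (exists b : V -> V -> CC,
        [/\ bilinear_form b, nondegenerate_form b, skew_bilin_form b
          & hinvariant S act b]))
    <->
    (exists (W : vectType CC) (actW : H -> 'End(W)),
        is_hmodule actW /\
        hmod_iso act (sum_act actW (dual_act S actW))).
Proof.
move=> hH hC V act ha _; split.
  move=> [[b1 [b1bil b1nd b1sym b1inv]] [b2 [b2bil b2nd b2skew b2inv]]].
  exact: (forward_dir ha b1bil b1nd b1sym b1inv b2bil b2nd b2skew b2inv).
move=> [W [actW [hW [phi [phib phiI]]]]].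
exact: (converse_dir hH hC hW phib phiI).
Qed.
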